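(* In the setting of the context, assume $\log(n)q(n)\to\delta^*\in(0,\infty)$, $m(n)^{-1}\log n\to0$ and $m(n)^{-1}v_n\to\infty$. Let $i_U=\big\lceil m(n)\frac{H_0-H_-+q(n)}{H_+-H_-}+U\big\rceil$. Then $\mathbb P^n_{H_0,\sigma_0}(\widehat i_n=i_U)\to1$.
   Context: $\Theta=[H_-,H_+]\times[\sigma_-,\sigma_+]\subset(0,1)\times(0,\infty)$, $(H_0,\sigma_0)$ interior; under $\mathbb P^n_{H_0,\sigma_0}$ one has a pilot estimator $\widehat H_n$ of $H_0$ and a sequence $v_n\to\infty$ such that $v_n(\widehat H_n-H_0)$ is bounded in probability (in the paper, $\widehat H_n$ is the preaveraged Whittle estimator with window $k(n)=n^{2H_+/(2H_++1)}(1+o(1))$ and $v_n=n^{1/(4H_++2)}$); $q(n)>0$, $m(n)$ positive integers, $U$ a uniform random variable on $[0,1]$ independent of the data (hence of $\widehat H_n$); $\widehat i_n=\big\lceil m(n)\frac{\widehat H_n-H_-+q(n)}{H_+-H_-}+U\big\rceil$. *)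

(* Defs.v *)
From HB Require Import structures.
From mathcomp Require Import all_boot all_order all_algebra.
From mathcomp Require Import all_classical all_reals all_analysis.
Set Implicit Arguments. Unset Strict Implicit. Unset Printing Implicit Defensive.
Import Order.TTheory GRing.Theory Num.Theory.
Local Open Scope classical_set_scope.
Local Open Scope ring_scope.

Definition indep_RV d (T : measurableType d) (R : realType)
  (P : probability T R) (X Y : T -> R) : Prop :=
  forall A B : set R, measurable A -> measurable B ->
    P (X @^-1` A `&` Y @^-1` B) = (P (X @^-1` A) * P (Y @^-1` B))%E.

Definition bounded_in_prob d (T : nat -> measurableType d) (R : realType)
  (P : forall n, probability (T n) R) (X : forall n, T n -> R) : Prop :=
  forall e : R, 0 < e -> exists M : R, exists N : nat, forall n, (N <= n)%N ->
    (P n [set w | (M < `|X n w|)%R] <= e%:E)%E.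

(* Main.v *)
Require Import Defs.
From HB Require Import structures.
From mathcomp Require Import all_boot all_order all_algebra.
From mathcomp Require Import all_classical all_reals all_analysis.
From mathcomp Require Import measurable_realfun.
From mathcomp Require Import ring lra zify.
Import Order.TTheory GRing.Theory Num.Theory.
Import numFieldNormedType.Exports.
Local Open Scope classical_set_scope.
Local Open Scope ring_scope.

Lemma key_ceil (R : realType) (x u D e : R) : `|D| <= e ->
  Num.ceil (x + u + D) <> Num.ceil (x + u) ->
  exists j : int, x + u - e <= j%:~R <= x + u + e.
Proof.
move=> hD hne; set y := x + u.
have [D0|D0] := leP 0 D.
  exists (Num.ceil y).
  have h1 : Num.ceil y <= Num.ceil (y + D) by apply: le_ceil; lra.
  have h2 : Num.ceil y < Num.ceil (y + D) by rewrite lt_neqAle h1 andbT; apply/eqP => /esym.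
  move: h2; rewrite ceil_gt_int => h2.
  have := ceil_ge y.
  have : D <= e by rewrite ger0_norm in hD.
  move=> *; apply/andP; split; lra.
exists (Num.ceil y - 1).
have h1 : Num.ceil (y + D) <= Num.ceil y by apply: le_ceil; lra.
have h2 : Num.ceil (y + D) < Num.ceil y by rewrite lt_neqAle h1 andbT; apply/eqP.
have h3 : Num.ceil (y + D) <= Num.ceil y - 1 by lia.
move: h3; rewrite ceil_le_int => h3.
have := ceilB1_lt y.
have : - D <= e by rewrite ltr0_norm in hD.
move=> *; apply/andP; split; lra.
Qed.

Lemma key3 (R : realType) (x u D e : R) : 0 <= u <= 1 -> `|D| <= e -> e < 1 ->
  Num.ceil (x + u + D) <> Num.ceil (x + u) ->
  exists i : nat, (i < 3)%N /\ ((Num.floor x)%:~R + i%:R - x - e <= u <= (Num.floor x)%:~R + i%:R - x + e).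
Proof.
move=> hu hD he hne.
have [j /andP[j1 j2]] := @key_ceil R x u D e hD hne.
have e0 : 0 <= e by apply: le_trans hD.
have := floor_le x; have := floorD1_gt x; rewrite intrD => f1 f2.
have a1 : (Num.floor x - 1)%:~R < j%:~R :> R by rewrite intrB; lra.
have a2 : j%:~R < (Num.floor x + 3)%:~R :> R by rewrite intrD; lra.
rewrite ltr_int in a1; rewrite ltr_int in a2.
have [k hk] : exists k : nat, j = Num.floor x + k%:Z /\ (k < 3)%N.
  exists `|j - Num.floor x|%N; lia.
case: hk => hj hk; exists k; split => //.
move: j1 j2; rewrite hj intrD /= => j1 j2.
rewrite ?pmulrn; idtac.
apply/andP; split; lra.
Qed.

Lemma meas_ceil_eq d (T : measurableType d) (R : realType) (f g : T -> R) :
  measurable_fun setT f -> measurable_fun setT g ->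
  measurable [set w | Num.ceil (f w) = Num.ceil (g w)].
Proof.
move=> mf mg.
pose S (j : int) := (f @^-1` `]((j - 1)%:~R : R), j%:~R]%classic) `&`
                    (g @^-1` `]((j - 1)%:~R : R), j%:~R]%classic).
have -> : [set w | Num.ceil (f w) = Num.ceil (g w)] =
   \bigcup_(k in [set: nat]) (S (Posz k) `|` S (Negz k)).
  apply/seteqP; split => w /=.
    move=> h; have hS : S (Num.ceil (f w)) w.
      by split => /=; rewrite in_itv /= -ceil_eq ?h.
    case E: (Num.ceil (f w)) hS => [k|k] hS; exists k => //; [left|right]; by [].
  case=> k _ [[]|[]]; rewrite /= !in_itv /= -!ceil_eq => /eqP -> /eqP -> //.
apply: bigcupT_measurable => k; apply: measurableU; apply: measurableI;
  (rewrite -[X in measurable X]setTI; first [exact: (mf measurableT _ (measurable_itv _)) | exact: (mg measurableT _ (measurable_itv _))]).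
Qed.

Lemma unif_le (R : realType) (A : set R) : measurable A ->
  (uniform_prob (@ltr01 R) A <= lebesgue_measure (A `&` `[0%R, 1%R]%classic))%E.
Proof.
move=> mA; rewrite /uniform_prob integral_uniform_pdf.
rewrite (@eq_integral _ _ _ _ _ (cst 1%E)); last first.
  move=> x; rewrite inE /= => -[_]; rewrite in_itv /= /uniform_pdf => ->.
  by rewrite subr0 invr1.
rewrite integral_cst ?mul1e //; apply: measurableI => //; exact: measurable_itv.
Qed.

Theorem lemma6p3 (R : realType)
  (Hm Hp sm sp H0 s0 : R)
  (hHm : 0 < Hm) (hHmp : Hm < Hp) (hHp : Hp < 1)
  (hsm : 0 < sm) (hsmp : sm < sp)
  (hH0 : Hm < H0 < Hp) (hs0 : sm < s0 < sp)
  (d : measure_display) (Omega : nat -> measurableType d)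
  (P : forall n, probability (Omega n) R)
  (Hhat : forall n, {RV (P n) >-> R})
  (U : forall n, {RV (P n) >-> R})
  (v : nat -> R) (q : nat -> R) (m : nat -> nat) (delta : R)
  (hU : forall n A, measurable A ->
          distribution (P n) (U n) A = uniform_prob (@ltr01 R) A)
  (hindep : forall n, indep_RV (P n) (Hhat n) (U n))
  (hv : v @ \oo --> +oo)
  (htight : bounded_in_prob P (fun n w => v n * (Hhat n w - H0)))
  (hq : forall n, 0 < q n)
  (hm : forall n, (0 < m n)%N)
  (hdelta : 0 < delta)
  (hlogq : (fun n : nat => ln n%:R * q n) @ \oo --> delta)
  (hlogm : (fun n : nat => ln n%:R / (m n)%:R) @ \oo --> (0 : R))
  (hvm : (fun n : nat => v n / (m n)%:R) @ \oo --> +oo) :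
  let ihat n w := Num.ceil ((m n)%:R * ((Hhat n w - Hm + q n) / (Hp - Hm)) + U n w) in
  let iU n w := Num.ceil ((m n)%:R * ((H0 - Hm + q n) / (Hp - Hm)) + U n w) in
  (fun n => P n [set w | ihat n w = iU n w]) @ \oo --> (1 : \bar R)%E.
Proof.
move=> ihat iU.
have c0 : 0 < Hp - Hm by rewrite subr_gt0.
pose E n := [set w | ihat n w = iU n w].
have mE : forall n, measurable (E n).
  move=> n.
  apply: (@meas_ceil_eq _ _ _
    (fun w => (m n)%:R * ((Hhat n w - Hm + q n) / (Hp - Hm)) + U n w)
    (fun w => (m n)%:R * ((H0 - Hm + q n) / (Hp - Hm)) + U n w)).
  - apply: measurable_funD; last exact: measurable_funP.
    apply: measurable_funM; first exact: measurable_cst.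
    apply: measurable_funM; last exact: measurable_cst.
    apply: measurable_funD; last exact: measurable_cst.
    apply: measurable_funB; last exact: measurable_cst.
    exact: measurable_funP.
  - apply: measurable_funD; last exact: measurable_funP.
    exact: measurable_cst.
apply: cvg_EFin.
  by near=> n; apply: fin_num_measure.
apply/cvgrPdist_le => e e0.
pose eps := Num.min (e / 12) (1/2).
have e12 : 0 < e / 12 by rewrite divr_gt0.
have eps0 : 0 < eps by rewrite lt_min e12 /=; lra.
have eps12 : eps <= e / 12 by rewrite ge_min lexx.
have eps1 : eps < 1 by apply: (le_lt_trans (y := 1/2)); [rewrite ge_min lexx orbT | lra].
have [M [N hMN]] := htight (e / 2) (divr_gt0 e0 (ltr0Sn _ 1)).
pose K := `|M| / (eps * (Hp - Hm)) + 1.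
move/cvgryPgt: hvm => hK.
near=> n.
have hn : (N <= n)%N by near: n; exact: nbhs_infty_ge.
have hvmn : K < v n / (m n)%:R by near: n; exact: hK.
change (`|1 - fine (P n (E n))| <= e).
have mp : 0 < (m n)%:R :> R by rewrite ltr0n.
have Kp : 0 < K.
  have : 0 <= `|M| / (eps * (Hp - Hm)) by rewrite divr_ge0 // ltW // mulr_gt0.
  rewrite /K; lra.
have vpos : 0 < v n.
  have : 0 < v n / (m n)%:R by apply: lt_trans hvmn.
  by rewrite pmulr_lgt0 // invr_gt0.
set x := (m n)%:R * ((H0 - Hm + q n) / (Hp - Hm)).
pose I (i : nat) := `[(Num.floor x)%:~R + i%:R - x - eps, (Num.floor x)%:~R + i%:R - x + eps]%classic : set R.
pose B := ~` `[0%R, 1%R]%classic `|` (I 0%N `|` I 1%N `|` I 2%N).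
pose T := [set w | M < `|v n * (Hhat n w - H0)|].
have mB : measurable B.
  apply: measurableU; first by apply: measurableC; exact: measurable_itv.
  by repeat apply: measurableU; exact: measurable_itv.
have mT : measurable T.
  have -> : T = (fun w => `|v n * (Hhat n w - H0)|) @^-1` `]M, +oo[%classic.
    by apply/seteqP; split => w /=; rewrite in_itv /= andbT.
  have mfn : measurable_fun setT (fun w => `|v n * (Hhat n w - H0)|).
    apply: measurableT_comp; first exact: normr_measurable.
    apply: measurable_funM; first exact: measurable_cst.
    apply: measurable_funB; [exact: measurable_funP | exact: measurable_cst].
  rewrite -[X in measurable X]setTI; exact: (mfn measurableT _ (measurable_itv _)).
have mUB : measurable (U n @^-1` B) by exact: measurable_funPTI.
have hsub : ~` E n `<=` T `|` U n @^-1` B.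
  move=> w /= hw.
  case: (ltP M `|v n * (Hhat n w - H0)|) => hM; [by left | right].
  rewrite /B /=.
  case: (boolP (U n w \in `[0%R, 1%R])) => hu; last by left; move=> /= h; move: hu; rewrite h.
  right.
  pose D := (m n)%:R * (Hhat n w - H0) / (Hp - Hm).
  have hD : `|D| <= eps.
    have ci : 0 < (Hp - Hm)^-1 by rewrite invr_gt0.
    rewrite /D normrM normrM (gtr0_norm mp) (gtr0_norm ci).
    set a := `|Hhat n w - H0|.
    have a0 : 0 <= a by exact: normr_ge0.
    move: hM; rewrite normrM (gtr0_norm vpos) -/a => hM.
    set r := v n / (m n)%:R in hvmn.
    have vr : v n = r * (m n)%:R by rewrite /r divfK // gt_eqF.
    have hMr : `|M| < r * (eps * (Hp - Hm)).
      have : `|M| / (eps * (Hp - Hm)) < r by rewrite /K in hvmn; lra.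
      by rewrite ltr_pdivrMr // mulr_gt0.
    have MM : M <= `|M| by exact: ler_norm.
    rewrite vr in hM.
    rewrite ler_pdivrMr //.
    nra.
  have hne : Num.ceil (x + U n w + D) <> Num.ceil (x + U n w).
    move=> h; apply: hw; rewrite /E /= /ihat /iU.
    have -> : (m n)%:R * ((Hhat n w - Hm + q n) / (Hp - Hm)) + U n w = x + U n w + D.
      by rewrite /x /D; field; rewrite (gt_eqF c0).
    exact: h.
  have hu' : 0 <= U n w <= 1 by move: hu; rewrite in_itv.
  have [i [hi hI]] := @key3 R x (U n w) D eps hu' hD eps1 hne.
  case: i hi hI => [|[|[|i]]] // _ hI; [left; left | left; right | right];
    by rewrite /I /= in_itv /=.
have mI : forall i, measurable (I i) by move=> i; exact: measurable_itv.
have hI : forall i, (lebesgue_measure (I i) = (2 * eps)%:E)%E.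
  move=> i; rewrite lebesgue_measure_itv /= lte_fin ifT; last lra.
  by rewrite -EFinB; congr EFin; lra.
have h2 : (P n (U n @^-1` B) <= (e / 2)%:E)%E.
  have -> : P n (U n @^-1` B) = uniform_prob (@ltr01 R) B := hU n B mB.
  apply: (le_trans (@unif_le R B mB)).
  have sub : B `&` `[0%R, 1%R]%classic `<=` I 0%N `|` I 1%N `|` I 2%N.
    by move=> u [[h|h] h'].
  apply: (@le_trans _ _ (lebesgue_measure (I 0%N `|` I 1%N `|` I 2%N))).
    apply: le_measure => //.
    - by rewrite inE; exact: (measurableI _ _ mB (measurable_itv _)).
    - by rewrite inE; apply: measurableU; [apply: measurableU|]; apply: mI.
  have h01 : (lebesgue_measure (I 0%N `|` I 1%N) <= lebesgue_measure (I 0%N) + lebesgue_measure (I 1%N))%E.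
    by apply: measureU2; apply: mI.
  have h012 : (lebesgue_measure (I 0%N `|` I 1%N `|` I 2%N) <= lebesgue_measure (I 0%N `|` I 1%N) + lebesgue_measure (I 2%N))%E.
    by apply: measureU2; [apply: measurableU|]; apply: mI.
  have h2' : (lebesgue_measure (I 2%N) <= (2 * eps)%:E)%E by rewrite hI.
  rewrite !hI in h01.
  apply: (le_trans h012); apply: (le_trans (leeD h01 h2')).
  by rewrite -!EFinD lee_fin; lra.
have h1 : (P n T <= (e / 2)%:E)%E by exact: hMN.
have hPc : (P n (~` E n) <= e%:E)%E.
  apply: (@le_trans _ _ (P n (T `|` U n @^-1` B))).
    apply: le_measure => //.
    - by rewrite inE; apply: measurableC; exact: mE.
    - by rewrite inE; exact: measurableU.
  apply: (le_trans (measureU2 _ mT mUB)).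
  apply: (le_trans (leeD h1 h2)).
  by rewrite -EFinD lee_fin; lra.
have hC : P n (~` E n) = (1 - P n (E n))%E by apply: probability_setC; exact: mE.
have ge0 : (0 <= P n (~` E n))%E by apply: measure_ge0.
set f := fine (P n (E n)).
have fE : P n (E n) = f%:E by rewrite /f fineK // fin_num_measure.
move: hPc ge0; rewrite hC fE -EFinB !lee_fin => hh1 hh2.
by rewrite ger0_norm.
Unshelve. all: by end_near.
Qed.
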